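(* Let $(X,d_X)$ be a proper, doubling metric space and $p\in X$, and assume $X$ is comparable $\eta$-self-quasisymmetric at $p$. Then $X$ admits an $\eta'$-quasisymmetric embedding into every proper weak tangent in $PWT_p(X)$, where $\eta'(t)=1/\eta^{-1}(1/t)$.
   Context: $\eta$ is a homeomorphism of $[0,\infty)$; a homeomorphism $f$ (onto its image) is $\eta$-quasisymmetric if $d(f(x),f(y))/d(f(x),f(z))\le\eta(d(x,y)/d(x,z))$ for $x\ne z$. $X$ is comparable $\eta$-self-quasisymmetric at $p$ if there are $r_p>0$ and $C_p>0$ such that for every $0<r<r_p$ there is a subset $U\subset B(p,r)$ with $p\in U$, $r/C_p\le\operatorname{diam}U\le C_pr$, and an $\eta$-quasisymmetric homeomorphism from $U$ onto $X$. Proper: closed balls compact; doubling: every set of diameter $d$ covered by a bounded number of sets of diameter $\le d/2$. A proper weak tangent of $X$ at $p$ is a pointed Gromov–Hausdorff limit of $(X,p,d_X/\lambda_n)$ with $\lambda_n\to0^+$ (pointed GH convergence $(X_n,p_n,d_n)\to(Z,z,d)$, $Z$ complete: for every $r,\varepsilon>0$, for large $n$ there is a map $g:B(p_n,r)\to Z$ with $g(p_n)=z$, additive distortion $<\varepsilon$, and $B(z,r-\varepsilon)$ in the $\varepsilon$-neighborhood of $g(B(p_n,r))$); $PWT_p(X)$ is the set of these. *)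

(* Defs.v *)
From Stdlib Require Import Reals Lra List.
Open Scope R_scope.

Record MetricSpace := {
  carrier :> Type;
  dist : carrier -> carrier -> R;
  dist_refl : forall x, dist x x = 0;
  dist_sym : forall x y, dist x y = dist y x;
  dist_tri : forall x y z, dist x z <= dist x y + dist y z;
  dist_sep : forall x y, dist x y = 0 -> x = y
}.
Arguments dist {m} _ _.

Section MetricDefs.
Variable X : MetricSpace.

Definition ball (p : X) (r : R) : X -> Prop := fun x => dist p x < r.
Definition cball (p : X) (r : R) : X -> Prop := fun x => dist p x <= r.

Definition is_open (U : X -> Prop) : Prop :=
  forall x, U x -> exists e, 0 < e /\ forall y, dist x y < e -> U y.

Definition is_compact (K : X -> Prop) : Prop :=
  forall (I : Type) (U : I -> X -> Prop),
    (forall i, is_open (U i)) ->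
    (forall x, K x -> exists i, U i x) ->
    exists l : list I, forall x, K x -> exists i, In i l /\ U i x.

Definition proper_space : Prop := forall p r, is_compact (cball p r).

Definition diam_le (A : X -> Prop) (D : R) : Prop :=
  forall x y, A x -> A y -> dist x y <= D.
Definition diam_ge (A : X -> Prop) (a : R) : Prop :=
  forall D, diam_le A D -> a <= D.

Definition doubling : Prop :=
  exists N : nat, forall (A : X -> Prop) (D : R),
    diam_le A D -> (forall D', diam_le A D' -> D <= D') ->
    exists B : nat -> X -> Prop,
      (forall i, diam_le (B i) (D / 2)) /\
      (forall x, A x -> exists i, (i < N)%nat /\ B i x).

Definition cauchy (u : nat -> X) : Prop :=
  forall e, 0 < e -> exists N, forall m n, (N <= m)%nat -> (N <= n)%nat ->
    dist (u m) (u n) < e.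
Definition seq_converges (u : nat -> X) (l : X) : Prop :=
  forall e, 0 < e -> exists N, forall n, (N <= n)%nat -> dist (u n) l < e.
Definition complete_space : Prop :=
  forall u, cauchy u -> exists l, seq_converges u l.

End MetricDefs.

Definition cont_on_nonneg (g : R -> R) : Prop :=
  forall t, 0 <= t -> forall e, 0 < e -> exists d, 0 < d /\
    forall s, 0 <= s -> Rabs (s - t) < d -> Rabs (g s - g t) < e.

Definition homeo_nonneg (eta : R -> R) : Prop :=
  (forall t, 0 <= t -> 0 <= eta t) /\
  (forall s t, 0 <= s -> 0 <= t -> eta s = eta t -> s = t) /\
  (forall u, 0 <= u -> exists t, 0 <= t /\ eta t = u) /\
  cont_on_nonneg eta /\
  (exists inv : R -> R,
     (forall u, 0 <= u -> 0 <= inv u /\ eta (inv u) = u) /\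
     cont_on_nonneg inv).

Definition qs_embedding_on {X Y : MetricSpace} (eta : R -> R)
    (U : X -> Prop) (f : X -> Y) : Prop :=
  (forall x x', U x -> U x' -> f x = f x' -> x = x') /\
  (forall x, U x -> forall e, 0 < e -> exists d, 0 < d /\
     forall x', U x' -> dist x x' < d -> dist (f x) (f x') < e) /\
  (forall x, U x -> forall e, 0 < e -> exists d, 0 < d /\
     forall x', U x' -> dist (f x) (f x') < d -> dist x x' < e) /\
  (forall x y z, U x -> U y -> U z -> x <> z ->
     dist (f x) (f y) / dist (f x) (f z) <= eta (dist x y / dist x z)).

Definition qs_embedding {X Y : MetricSpace} (eta : R -> R) (f : X -> Y) : Prop :=
  qs_embedding_on eta (fun _ => True) f.

Definition comparable_self_qs (X : MetricSpace) (eta : R -> R) (p : X) : Prop :=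
  exists rp Cp, 0 < rp /\ 0 < Cp /\
    forall r, 0 < r -> r < rp ->
      exists (U : X -> Prop) (f : X -> X),
        (forall x, U x -> ball X p r x) /\ U p /\
        diam_ge X U (r / Cp) /\ diam_le X U (Cp * r) /\
        qs_embedding_on eta U f /\
        (forall y : X, exists x, U x /\ f x = y).

Definition pGH_conv_scaled (X : MetricSpace) (p : X) (lam : nat -> R)
    (Z : MetricSpace) (z : Z) : Prop :=
  forall r e, 0 < r -> 0 < e -> exists N, forall n, (N <= n)%nat ->
    exists g : X -> Z, g p = z /\
      (forall x y, dist p x / lam n < r -> dist p y / lam n < r ->
         Rabs (dist (g x) (g y) - dist x y / lam n) < e) /\
      (forall w : Z, dist z w < r - e ->
         exists x, dist p x / lam n < r /\ dist (g x) w < e).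

Definition proper_weak_tangent (X : MetricSpace) (p : X)
    (Z : MetricSpace) (z : Z) : Prop :=
  proper_space Z /\ complete_space Z /\
  exists lam : nat -> R,
    (forall n, 0 < lam n) /\
    (forall e, 0 < e -> exists N, forall n, (N <= n)%nat -> lam n < e) /\
    pGH_conv_scaled X p lam Z z.

(** eta'(t) = 1 / eta^{-1}(1/t), with eta'(0) = 0 (its limit value). *)
Definition eta_prime (etainv : R -> R) (t : R) : R :=
  if Req_EM_T t 0 then 0 else / etainv (/ t).

(* Main.v *)
From Stdlib Require Import Reals.
From Stdlib Require Import Lra Lia List Classical ClassicalEpsilon.
Require Import Defs.
Open Scope R_scope.


Definition inf_set (S : nat -> Prop) : Prop := forall N, exists n, (N <= n)%nat /\ S n.

Lemma dist_nonneg (M : MetricSpace) (x y : M) : 0 <= dist x y.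
Proof.
  pose proof (dist_tri M x y x). rewrite dist_refl, (dist_sym M y x) in H. lra.
Qed.

Lemma dist_rev (M : MetricSpace) (a b a' b' : M) :
  Rabs (dist a b - dist a' b') <= dist a a' + dist b b'.
Proof.
  pose proof (dist_tri M a a' b). pose proof (dist_tri M a' b' b).
  pose proof (dist_tri M a' a b'). pose proof (dist_tri M a b b').
  rewrite (dist_sym M a' a) in *. rewrite (dist_sym M b' b) in *.
  apply Rabs_le; lra.
Qed.

Lemma net_of_compact (M : MetricSpace) (K : M -> Prop) (rho : R) :
  is_compact M K -> 0 < rho ->
  exists l : list M, forall x, K x -> exists c, In c l /\ dist c x < rho.
Proof.
  intros HK Hr.
  destruct (HK M (fun c => ball M c rho)) as [l Hl].
  - intros c x Hx. exists (rho - dist c x). split. unfold ball in Hx. lra.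
    intros y Hy. unfold ball. pose proof (dist_tri M c x y). lra.
  - intros x _. exists x. unfold ball. rewrite dist_refl. lra.
  - exists l. intros x Hx. destruct (Hl x Hx) as [c [Hc1 Hc2]]. exists c. split; auto.
Qed.

Lemma pigeon {A : Type} (S : nat -> Prop) (Q : nat -> A -> Prop) (l : list A) :
  inf_set S -> (forall n, S n -> exists c, In c l /\ Q n c) ->
  exists c, In c l /\ inf_set (fun n => S n /\ Q n c).
Proof.
  revert S. induction l as [|a l IH]; intros S HS Hc.
  - destruct (HS 0%nat) as [n [_ Hn]]. destruct (Hc n Hn) as [c [[] _]].
  - destruct (classic (inf_set (fun n => S n /\ Q n a))) as [Ha|Ha].
    + exists a. split; [left; auto | auto].
    + unfold inf_set in Ha. apply not_all_ex_not in Ha. destruct Ha as [N HN].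
      destruct (IH (fun n => S n /\ (N <= n)%nat)) as [c [Hc1 Hc2]].
      * intros M. destruct (HS (Nat.max M N)) as [n [Hn1 Hn2]]. exists n. split; [lia|split; auto; lia].
      * intros n [Hn1 Hn2]. destruct (Hc n Hn1) as [c [[<-|Hc1] Hc2]].
        -- exfalso. apply HN. exists n. auto.
        -- exists c. auto.
      * exists c. split; [right; auto|]. intros M. destruct (Hc2 M) as [n [Hn1 [[Hn2 _] Hn3]]].
        exists n. auto.
Qed.

Lemma refine_list {A B : Type} (S : nat -> Prop) (Q : nat -> A -> B -> Prop) (L : list A) (M : list B) :
  inf_set S -> (forall n a, exists c, In c M /\ Q n a c) ->
  exists S', (forall n, S' n -> S n) /\ inf_set S' /\
    forall a, In a L -> exists c, forall n, S' n -> Q n a c.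
Proof.
  revert S. induction L as [|a L IH]; intros S HS HQ.
  - exists S. split; auto. split; auto. intros a [].
  - destruct (pigeon S (fun n c => Q n a c) M HS) as [c [_ Hc]].
    { intros n _. apply HQ. }
    destruct (IH _ Hc HQ) as [S' [H1 [H2 H3]]].
    exists S'. split; [intros n Hn; apply H1; auto|]. split; auto.
    intros b [<-|Hb].
    + exists c. intros n Hn. apply H1; auto.
    + apply H3; auto.
Qed.

Lemma diagonal (P : nat -> nat -> nat -> Prop) :
  (forall k S, inf_set S -> exists S', (forall n, S' n -> S n) /\ inf_set S' /\
      forall n m, S' n -> S' m -> P k n m) ->
  exists sigma : nat -> nat, forall k i j, (k <= i)%nat -> (k <= j)%nat -> P k (sigma i) (sigma j).
Proof.
  intros Hstep.
  assert (Hf : forall k S, exists S', inf_set S -> (forall n, S' n -> S n) /\ inf_set S' /\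
      forall n m, S' n -> S' m -> P k n m).
  { intros k S. destruct (classic (inf_set S)) as [HS|HS].
    - destruct (Hstep k S HS) as [S' HS']. exists S'. auto.
    - exists S. intros; contradiction. }
  pose (Rf := fun k S => proj1_sig (constructive_indefinite_description _ (Hf k S))).
  assert (HRf : forall k S, inf_set S -> (forall n, Rf k S n -> S n) /\ inf_set (Rf k S) /\
      forall n m, Rf k S n -> Rf k S m -> P k n m).
  { intros k S. unfold Rf. destruct (constructive_indefinite_description _ (Hf k S)). simpl. auto. }
  pose (F := fix F (k : nat) : nat -> Prop := match k with O => fun _ => True | S k' => Rf k' (F k') end).
  assert (Finf : forall k, inf_set (F k)).
  { induction k; simpl. intros N. exists N. auto. apply HRf; auto. }
  assert (Fsub : forall k n, F (S k) n -> F k n).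
  { intros k n. simpl. apply HRf; auto. }
  assert (Fmono : forall k i n, (k <= i)%nat -> F i n -> F k n).
  { intros k i n Hki. induction Hki; auto. }
  assert (Fex : forall k, exists n, F k n).
  { intros k. destruct (Finf k 0%nat) as [n [_ Hn]]. eauto. }
  exists (fun i => proj1_sig (constructive_indefinite_description _ (Fex (S i)))).
  intros k i j Hi Hj.
  destruct (constructive_indefinite_description _ (Fex (S i))) as [a Ha].
  destruct (constructive_indefinite_description _ (Fex (S j))) as [b Hb]. simpl.
  apply (HRf k (F k) (Finf k)).
  - apply (Fmono (S k) (S i)); auto; lia.
  - apply (Fmono (S k) (S j)); auto; lia.
Qed.


Lemma small_inv (e : R) : 0 < e -> exists N, forall n, (N <= n)%nat -> / INR (S n) < e.
Proof.
  intros He. destruct (archimed_cor1 e He) as [N [HN1 HN2]]. exists N. intros n Hn.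
  apply Rle_lt_trans with (/ INR N); auto.
  apply Rinv_le_contravar. apply lt_0_INR; lia. apply le_INR; lia.
Qed.

Lemma inv_pos (n : nat) : 0 < / INR (S n).
Proof. apply Rinv_0_lt_compat, lt_0_INR; lia. Qed.

Lemma le_eps (a b : R) : (forall e, 0 < e -> a < b + e) -> a <= b.
Proof. intros H. destruct (Rle_or_lt a b); auto. specialize (H (a - b)). lra. Qed.

Lemma converge (X Z : MetricSpace) (z : Z) (H : nat -> X -> Z) (A : nat -> X -> X -> R) :
 (forall rho, 0 < rho -> exists l : list X, forall x, exists c, In c l /\ dist c x < rho) ->
 is_compact Z (cball Z z 2) -> complete_space Z ->
 (forall k x, dist z (H k x) <= 2) ->
 (forall k x y, Rabs (dist (H k x) (H k y) - A k x y) < / INR (S k)) ->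
 (forall e, 0 < e -> exists rho, 0 < rho /\ forall k x y, dist x y < rho -> A k x y < e) ->
 exists h : X -> Z, forall e, 0 < e -> exists k, forall x y, Rabs (dist (h x) (h y) - A k x y) < e.
Proof.
  intros HnetX HK Hcomp HQ1 HQ2 HQ3.
  assert (Hstep : forall k (T : nat -> Prop), inf_set T -> exists S', (forall n, S' n -> T n) /\ inf_set S' /\
      forall n m, S' n -> S' m -> (k <= n)%nat /\ forall x, dist (H n x) (H m x) < / INR (S k)).
  { intros k T HS. set (e := / INR (S k)). assert (He : 0 < e) by apply inv_pos.
    destruct (HQ3 (e/6)) as [rho [Hrho HA]]; [lra|].
    destruct (HnetX rho Hrho) as [L HL].
    destruct (net_of_compact Z _ (e/6) HK) as [M HM]; [lra|].
    destruct (small_inv (e/6)) as [K0 HK0]; [lra|].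
    destruct (refine_list (fun n => T n /\ (Nat.max k K0 <= n)%nat)
       (fun n a c => dist c (H n a) < e/6) L M) as [S' [H1 [H2 H3]]].
    - intros N. destruct (HS (Nat.max N (Nat.max k K0))) as [n [Hn1 Hn2]]. exists n. split; [lia|]. split; auto; lia.
    - intros n a. assert (Hc0 : cball Z z 2 (H n a)) by (unfold cball; apply HQ1). destruct (HM (H n a) Hc0) as [c Hc]. exists c. exact Hc.
    - exists S'. split. intros n Hn. apply H1; auto. split; auto.
      intros n m Hn Hm. destruct (H1 n Hn) as [_ Hn']. destruct (H1 m Hm) as [_ Hm'].
      split; [lia|]. intros x.
      destruct (HL x) as [l [Hl1 Hl2]]. destruct (H3 l Hl1) as [c Hc].
      pose proof (Hc n Hn). pose proof (Hc m Hm).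
      rewrite dist_sym in Hl2.
      pose proof (HA n x l Hl2). pose proof (HA m x l Hl2).
      pose proof (HQ2 n x l). pose proof (HQ2 m x l).
      pose proof (HK0 n ltac:(lia)). pose proof (HK0 m ltac:(lia)).
      apply Rabs_def2 in H7. apply Rabs_def2 in H8.
      pose proof (dist_tri Z (H n x) (H n l) (H m x)).
      pose proof (dist_tri Z (H n l) c (H m x)).
      pose proof (dist_tri Z c (H m l) (H m x)).
      rewrite (dist_sym Z (H n l) c) in *. rewrite (dist_sym Z (H m l) (H m x)) in *.
      lra. }
  destruct (diagonal _ Hstep) as [sigma Hsig].
  assert (Hcau : forall x, cauchy Z (fun i => H (sigma i) x)).
  { intros x e He. destruct (small_inv e He) as [N HN]. exists N. intros m n Hm Hn.
    destruct (Hsig N m n Hm Hn) as [_ Hd]. specialize (Hd x). specialize (HN N (le_n _)). lra. }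
  pose (h := fun x => proj1_sig (constructive_indefinite_description _ (Hcomp _ (Hcau x)))).
  assert (Hh : forall x, seq_converges Z (fun i => H (sigma i) x) (h x)).
  { intros x. unfold h. destruct (constructive_indefinite_description _ _). auto. }
  assert (Hunif : forall k i x, (k <= i)%nat -> dist (H (sigma i) x) (h x) <= / INR (S k)).
  { intros k i x Hki. apply le_eps. intros e He. destruct (Hh x e He) as [N HN].
    specialize (HN (Nat.max N k) ltac:(lia)). destruct (Hsig k i (Nat.max N k) Hki ltac:(lia)) as [_ Hd].
    specialize (Hd x). pose proof (dist_tri Z (H (sigma i) x) (H (sigma (Nat.max N k)) x) (h x)). simpl in HN. lra. }
  exists h. intros e He. destruct (small_inv (e/3)) as [k Hk]; [lra|].
  exists (sigma k). intros x y.
  destruct (Hsig k k k (le_n _) (le_n _)) as [Hsk _].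
  pose proof (Hunif k k x (le_n _)) as U1. pose proof (Hunif k k y (le_n _)) as U2.
  pose proof (HQ2 (sigma k) x y) as U3.
  pose proof (Hk k (le_n _)) as U4.
  assert (U5 : / INR (S (sigma k)) <= / INR (S k)).
  { apply Rinv_le_contravar. apply lt_0_INR; lia. apply le_INR; lia. }
  pose proof (dist_rev Z (h x) (h y) (H (sigma k) x) (H (sigma k) y)) as U6.
  rewrite (dist_sym Z (H (sigma k) x)) in U1. rewrite (dist_sym Z (H (sigma k) y)) in U2.
  revert U3 U6. unfold Rabs. repeat destruct Rcase_abs; intros; lra.
Qed.


Lemma dist_pos (M : MetricSpace) (x y : M) : x <> y -> 0 < dist x y.
Proof.
  intros Hxy. destruct (dist_nonneg M x y) as [H|H]; auto.
  exfalso. apply Hxy. apply dist_sep. auto.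
Qed.

Lemma abs_lt (a b : R) : Rabs a < b -> - b < a < b.
Proof. unfold Rabs. destruct Rcase_abs; lra. Qed.

Lemma assemble (X Z : MetricSpace) (E : R -> R) (A : nat -> X -> X -> R) (h : X -> Z) :
 (forall e, 0 < e -> exists k, forall x y, Rabs (dist (h x) (h y) - A k x y) < e) ->
 (forall e, 0 < e -> exists rho, 0 < rho /\ forall k x y, dist x y < rho -> A k x y < e) ->
 (forall rho, 0 < rho -> exists beta, 0 < beta /\ forall k x y, rho <= dist x y -> beta <= A k x y) ->
 (forall k x y z, x <> z -> A k x y <= A k x z * E (dist x y / dist x z)) ->
 (forall t, 0 <= t -> 0 <= E t) ->
 qs_embedding E h.
Proof.
  intros Happ HQ3 HQ4 HQ5 HE.
  assert (Hlow : forall x x', x <> x' -> 0 < dist (h x) (h x')).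
  { intros x x' Hx. destruct (HQ4 (dist x x')) as [beta [Hb1 Hb2]]. apply dist_pos; auto.
    destruct (Happ (beta/2)) as [k Hk]. lra. specialize (Hk x x'). apply abs_lt in Hk.
    specialize (Hb2 k x x' (Rle_refl _)). lra. }
  split; [|split; [|split]].
  - intros x x' _ _ Hfx. destruct (classic (x = x')) as [|Hn]; auto.
    specialize (Hlow x x' Hn). rewrite Hfx, dist_refl in Hlow. lra.
  - intros x _ e He. destruct (HQ3 (e/2)) as [rho [Hr1 Hr2]]. lra.
    exists rho. split; auto. intros x' _ Hd.
    destruct (Happ (e/2)) as [k Hk]. lra. specialize (Hk x x'). apply abs_lt in Hk.
    specialize (Hr2 k x x' Hd). lra.
  - intros x _ e He. destruct (HQ4 e He) as [beta [Hb1 Hb2]].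
    exists (beta/2). split. lra. intros x' _ Hd.
    destruct (Rlt_or_le (dist x x') e) as [|Hge]; auto. exfalso.
    destruct (Happ (beta/2)) as [k Hk]. lra. specialize (Hk x x'). apply abs_lt in Hk.
    specialize (Hb2 k x x' Hge). lra.
  - intros x y z _ _ _ Hxz.
    pose proof (Hlow x z Hxz) as Hb.
    set (t := dist x y / dist x z).
    assert (Ht : 0 <= t).
    { unfold t. apply Rmult_le_pos. apply dist_nonneg. left. apply Rinv_0_lt_compat. apply dist_pos; auto. }
    pose proof (HE t Ht) as HEt.
    assert (Hab : dist (h x) (h y) <= dist (h x) (h z) * E t).
    { apply le_eps. intros e He. set (e' := e / (E t + 1)).
      assert (He' : 0 < e') by (unfold e'; apply Rdiv_lt_0_compat; lra).
      destruct (Happ e' He') as [k Hk].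
      pose proof (Hk x y) as K1. pose proof (Hk x z) as K2. apply abs_lt in K1. apply abs_lt in K2.
      pose proof (HQ5 k x y z Hxz) as K3. fold t in K3.
      assert (A k x z * E t <= (dist (h x) (h z) + e') * E t) by (apply Rmult_le_compat_r; lra).
      assert (e' * (E t + 1) = e) by (unfold e'; field; lra).
      nra. }
    apply Rmult_le_reg_r with (dist (h x) (h z)); auto.
    unfold Rdiv. rewrite Rmult_assoc, Rinv_l by lra. lra.
Qed.


Lemma ext_cont (eta : R -> R) (v : R) (sg : R) :
  cont_on_nonneg eta -> continuity (fun x => sg * (eta (Rmax x 0) - v)).
Proof.
  intros Hc x0. unfold continuity_pt, continue_in, limit1_in, limit_in. simpl. unfold R_dist.
  intros eps Heps.
  destruct (Hc (Rmax x0 0) (Rmax_r _ _) (eps / (Rabs sg + 1))) as [d [Hd1 Hd2]].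
  { apply Rdiv_lt_0_compat; auto. pose proof (Rabs_pos sg). lra. }
  exists d. split; auto. intros x [_ Hx].
  assert (Hm : Rabs (Rmax x 0 - Rmax x0 0) < d).
  { unfold Rmax, Rabs in *. repeat destruct Rle_dec; repeat destruct Rcase_abs; lra. }
  specialize (Hd2 (Rmax x 0) (Rmax_r _ _) Hm).
  replace (sg * (eta (Rmax x 0) - v) - sg * (eta (Rmax x0 0) - v)) with (sg * (eta (Rmax x 0) - eta (Rmax x0 0))) by ring.
  rewrite Rabs_mult. pose proof (Rabs_pos sg).
  apply Rle_lt_trans with (Rabs sg * (eps / (Rabs sg + 1))).
  apply Rmult_le_compat_l; lra.
  apply Rlt_le_trans with ((Rabs sg + 1) * (eps / (Rabs sg + 1))).
  apply Rmult_lt_compat_r. apply Rdiv_lt_0_compat; lra. lra.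
  right. field. lra.
Qed.

Lemma ivt_eta (eta : R -> R) (a b v : R) :
  cont_on_nonneg eta -> 0 <= a -> a < b ->
  (eta a < v < eta b \/ eta b < v < eta a) -> exists u, a <= u <= b /\ eta u = v.
Proof.
  intros Hc Ha Hab [Hv|Hv].
  - destruct (IVT (fun x => 1 * (eta (Rmax x 0) - v)) a b (ext_cont eta v 1 Hc) Hab) as [u [Hu1 Hu2]].
    + rewrite Rmax_left by lra. lra.
    + rewrite Rmax_left by lra. lra.
    + exists u. split; auto. rewrite Rmax_left in Hu2 by lra. lra.
  - destruct (IVT (fun x => -1 * (eta (Rmax x 0) - v)) a b (ext_cont eta v (-1) Hc) Hab) as [u [Hu1 Hu2]].
    + rewrite Rmax_left by lra. lra.
    + rewrite Rmax_left by lra. lra.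
    + exists u. split; auto. rewrite Rmax_left in Hu2 by lra. lra.
Qed.

Lemma eta_zero (eta : R -> R) : homeo_nonneg eta -> eta 0 = 0.
Proof.
  intros [Hpos [Hinj [Hsurj [Hc _]]]].
  pose proof (Hpos 0 (Rle_refl _)) as H0.
  destruct H0 as [H0|H0]; [|auto].
  exfalso. set (c := eta 0) in *.
  destruct (Hsurj (c/2)) as [t1 [Ht1 E1]]; [lra|].
  destruct (Hsurj (2*c)) as [t2 [Ht2 E2]]; [lra|].
  assert (t1 <> 0) by (intros ->; unfold c in *; lra).
  destruct (Rtotal_order t1 t2) as [Hlt|[Heq|Hgt]].
  - destruct (ivt_eta eta t1 t2 c Hc Ht1 Hlt) as [u [Hu1 Hu2]]. left; lra.
    assert (u = 0) by (apply Hinj; auto; lra). lra.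
  - subst. lra.
  - destruct (ivt_eta eta t2 t1 c Hc Ht2 Hgt) as [u [Hu1 Hu2]]. right; lra.
    assert (u = 0) by (apply Hinj; auto; lra).
    assert (t2 = 0) by lra. subst. unfold c in E2. lra.
Qed.

Lemma eta_incr (eta : R -> R) : homeo_nonneg eta ->
  forall s t, 0 <= s -> s < t -> eta s < eta t.
Proof.
  intros Hh. pose proof (eta_zero eta Hh) as Hz.
  destruct Hh as [Hpos [Hinj [Hsurj [Hc _]]]].
  intros s t Hs Hst.
  assert (Htp : 0 < eta t).
  { destruct (Hpos t ltac:(lra)) as [|H]; auto. exfalso. rewrite <- Hz in H.
    apply Hinj in H; lra. }
  destruct (Rtotal_order (eta s) (eta t)) as [|[Heq|Hgt]]; auto.
  - apply Hinj in Heq; lra.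
  - destruct Hs as [Hs|Hs].
    + destruct (ivt_eta eta 0 s (eta t) Hc (Rle_refl _) Hs) as [u [Hu1 Hu2]]. left; lra.
      apply Hinj in Hu2; lra.
    + subst. lra.
Qed.




Lemma inv_le (eta etainv : R -> R) : homeo_nonneg eta ->
  (forall u, 0 <= u -> 0 <= etainv u /\ eta (etainv u) = u) ->
  forall u t, 0 <= u -> 0 <= t -> u <= eta t -> etainv u <= t.
Proof.
  intros Hh Hinv u t Hu Ht Hle. destruct (Hinv u Hu) as [H1 H2].
  destruct (Rle_or_lt (etainv u) t) as [|Hlt]; auto.
  pose proof (eta_incr eta Hh t (etainv u) Ht Hlt). lra.
Qed.

Lemma inv_gt (eta etainv : R -> R) : homeo_nonneg eta ->
  (forall u, 0 <= u -> 0 <= etainv u /\ eta (etainv u) = u) ->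
  forall u M, 0 <= u -> 0 <= M -> eta M < u -> M < etainv u.
Proof.
  intros Hh Hinv u M Hu HM Hlt. destruct (Hinv u Hu) as [H1 H2].
  destruct (Rlt_or_le M (etainv u)) as [|[Hle|Heq]]; auto.
  - pose proof (eta_incr eta Hh (etainv u) M H1 Hle). lra.
  - rewrite <- Heq in Hlt. lra.
Qed.

Lemma einv_pos (eta etainv : R -> R) : homeo_nonneg eta ->
  (forall u, 0 <= u -> 0 <= etainv u /\ eta (etainv u) = u) ->
  forall u, 0 < u -> 0 < etainv u.
Proof.
  intros Hh Hinv u Hu. destruct (Hinv u ltac:(lra)) as [[H1|H1] H2]; auto.
  rewrite <- H1, (eta_zero eta Hh) in H2. lra.
Qed.

Lemma inv_mono (eta etainv : R -> R) : homeo_nonneg eta ->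
  (forall u, 0 <= u -> 0 <= etainv u /\ eta (etainv u) = u) ->
  forall u u', 0 <= u -> u <= u' -> etainv u <= etainv u'.
Proof.
  intros Hh Hinv u u' Hu Huu. destruct (Hinv u' ltac:(lra)) as [H1 H2].
  apply (inv_le eta etainv Hh Hinv); auto. lra.
Qed.

Lemma etaP_pos (eta etainv : R -> R) : homeo_nonneg eta ->
  (forall u, 0 <= u -> 0 <= etainv u /\ eta (etainv u) = u) ->
  forall t, 0 < t -> 0 < eta_prime etainv t.
Proof.
  intros Hh Hinv t Ht. unfold eta_prime. destruct (Req_EM_T t 0). lra.
  apply Rinv_0_lt_compat. apply (einv_pos eta etainv Hh Hinv). apply Rinv_0_lt_compat; auto.
Qed.

Lemma etaP_nonneg (eta etainv : R -> R) : homeo_nonneg eta ->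
  (forall u, 0 <= u -> 0 <= etainv u /\ eta (etainv u) = u) ->
  forall t, 0 <= t -> 0 <= eta_prime etainv t.
Proof.
  intros Hh Hinv t [Ht|Ht]. left. apply (etaP_pos eta etainv Hh Hinv); auto.
  subst. unfold eta_prime. destruct (Req_EM_T 0 0); lra.
Qed.

Lemma etaP_mono (eta etainv : R -> R) : homeo_nonneg eta ->
  (forall u, 0 <= u -> 0 <= etainv u /\ eta (etainv u) = u) ->
  forall t t', 0 <= t -> t <= t' -> eta_prime etainv t <= eta_prime etainv t'.
Proof.
  intros Hh Hinv t t' [Ht|Ht] Htt.
  - unfold eta_prime. destruct (Req_EM_T t 0); [lra|]. destruct (Req_EM_T t' 0); [lra|].
    apply Rinv_le_contravar. apply (einv_pos eta etainv Hh Hinv). apply Rinv_0_lt_compat; lra.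
    apply (inv_mono eta etainv Hh Hinv). left; apply Rinv_0_lt_compat; lra.
    apply Rinv_le_contravar; lra.
  - subst. replace (eta_prime etainv 0) with 0.
    apply (etaP_nonneg eta etainv Hh Hinv); lra.
    unfold eta_prime. destruct (Req_EM_T 0 0); lra.
Qed.

Lemma etaP_small (eta etainv : R -> R) : homeo_nonneg eta ->
  (forall u, 0 <= u -> 0 <= etainv u /\ eta (etainv u) = u) ->
  forall e, 0 < e -> exists rho, 0 < rho /\ forall t, 0 <= t < rho -> eta_prime etainv t < e.
Proof.
  intros Hh Hinv e He.
  pose proof (proj1 Hh (/ e) ltac:(left; apply Rinv_0_lt_compat; lra)) as Hp.
  exists (/ (eta (/ e) + 1)). split. apply Rinv_0_lt_compat; lra.
  intros t [[Ht|Ht] Htr].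
  - unfold eta_prime. destruct (Req_EM_T t 0); [lra|].
    assert (Hbig : eta (/ e) < / t).
    { assert (eta (/e) + 1 < / t); [|lra].
      rewrite <- (Rinv_inv (eta (/ e) + 1)). apply Rinv_lt_contravar; auto.
      apply Rmult_lt_0_compat; auto. apply Rinv_0_lt_compat; lra. }
    pose proof (inv_gt eta etainv Hh Hinv (/ t) (/ e)) as Hg.
    assert (/ e < etainv (/ t)) by (apply Hg; [left; apply Rinv_0_lt_compat; lra| left; apply Rinv_0_lt_compat; lra| auto]).
    rewrite <- (Rinv_inv e). apply Rinv_lt_contravar; auto.
    apply Rmult_lt_0_compat; auto. apply Rinv_0_lt_compat; lra. assert (0 < / e) by (apply Rinv_0_lt_compat; lra). lra.
  - subst. unfold eta_prime. destruct (Req_EM_T 0 0); lra.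
Qed.

Lemma etaP_val (etainv : R -> R) (a b : R) : 0 < a -> 0 < b ->
  eta_prime etainv (a / b) = / etainv (b / a).
Proof.
  intros Ha Hb. unfold eta_prime. destruct (Req_EM_T (a/b) 0) as [e|].
  - exfalso. assert (0 < a / b) by (apply Rdiv_lt_0_compat; auto). lra.
  - rewrite Rinv_div. auto.
Qed.


Lemma diam_wit (X : MetricSpace) (U : X -> Prop) (a D : R) :
  diam_ge X U a -> D < a -> exists x y, U x /\ U y /\ D < dist x y.
Proof.
  intros Hg HD. destruct (classic (exists x y, U x /\ U y /\ D < dist x y)) as [|Hn]; auto.
  exfalso. assert (diam_le X U D).
  { intros x y Hx Hy. destruct (Rle_or_lt (dist x y) D); auto. exfalso. apply Hn. eauto. }
  specialize (Hg D H). lra.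
Qed.

Lemma single (X : MetricSpace) (p : X) (eta etainv : R -> R) :
  homeo_nonneg eta ->
  (forall u, 0 <= u -> 0 <= etainv u /\ eta (etainv u) = u) ->
  forall (Cp r : R) (U : X -> Prop) (f : X -> X),
  0 < r -> 0 < Cp ->
  (forall x, U x -> ball X p r x) -> diam_ge X U (r / Cp) -> qs_embedding_on eta U f ->
  (forall y, exists x, U x /\ f x = y) ->
  exists psi : X -> X, (forall x, dist p (psi x) < r) /\ (forall x z, psi x = psi z -> x = z) /\
   (forall x y z, x <> z -> dist (psi x) (psi y) <= dist (psi x) (psi z) * eta_prime etainv (dist x y / dist x z)) /\
   (exists a b, r / (2 * Cp) < dist (psi a) (psi b)).
Proof.
  intros Hh Hinv Cp r U f Hr HC HUb Hdg [Hinj [_ [_ Hqs]]] Hsurj.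
  pose (psi := fun y => proj1_sig (constructive_indefinite_description _ (Hsurj y))).
  assert (Hpsi : forall y, U (psi y) /\ f (psi y) = y).
  { intros y. unfold psi. destruct (constructive_indefinite_description _ _). auto. }
  assert (Hpinj : forall x z, psi x = psi z -> x = z).
  { intros x z E. rewrite <- (proj2 (Hpsi x)), <- (proj2 (Hpsi z)), E. auto. }
  exists psi. split; [|split; [auto|split]].
  - intros x. apply HUb. apply Hpsi.
  - intros x y z Hxz.
    pose proof (etaP_nonneg eta etainv Hh Hinv) as HPn.
    destruct (classic (x = y)) as [<-|Hxy].
    + rewrite dist_refl. apply Rmult_le_pos. apply dist_nonneg. apply HPn.
      rewrite dist_refl. unfold Rdiv. rewrite Rmult_0_l. lra.
    + assert (Hne : psi x <> psi y) by (intros E; apply Hxy; auto).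
      pose proof (Hqs (psi x) (psi z) (psi y) (proj1 (Hpsi x)) (proj1 (Hpsi z)) (proj1 (Hpsi y)) Hne) as Q.
      rewrite (proj2 (Hpsi x)), (proj2 (Hpsi y)), (proj2 (Hpsi z)) in Q.
      pose proof (dist_pos X x y Hxy) as Dxy. pose proof (dist_pos X x z Hxz) as Dxz.
      pose proof (dist_pos X _ _ Hne) as Dy.
      pose proof (dist_nonneg X (psi x) (psi z)) as Dz.
      assert (Hu : 0 < dist x z / dist x y) by (apply Rdiv_lt_0_compat; auto).
      assert (HT : 0 <= dist (psi x) (psi z) / dist (psi x) (psi y)).
      { apply Rmult_le_pos; auto. left; apply Rinv_0_lt_compat; auto. }
      pose proof (inv_le eta etainv Hh Hinv _ _ (Rlt_le _ _ Hu) HT Q) as HE.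
      pose proof (einv_pos eta etainv Hh Hinv _ Hu) as HEp.
      rewrite (etaP_val etainv _ _ Dxy Dxz).
      set (E := etainv (dist x z / dist x y)) in *.
      apply Rmult_le_reg_r with E; auto.
      rewrite Rmult_assoc, Rinv_l by lra. rewrite Rmult_1_r.
      apply Rmult_le_compat_r with (r := dist (psi x) (psi y)) in HE; [|lra].
      unfold Rdiv in HE. rewrite Rmult_assoc, Rinv_l in HE by lra. lra.
  - destruct (diam_wit X U (r / Cp) (r / (2 * Cp)) Hdg) as [x [y [Hx [Hy Hd]]]].
    { unfold Rdiv. rewrite Rinv_mult. assert (0 < r * / Cp) by (apply Rmult_lt_0_compat; auto; apply Rinv_0_lt_compat; auto). 
      replace (r * (/ 2 * / Cp)) with ((r * / Cp) / 2) by (field; lra). lra. }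
    exists (f x), (f y).
    assert (psi (f x) = x) by (apply Hinj; auto; apply Hpsi).
    assert (psi (f y) = y) by (apply Hinj; auto; apply Hpsi).
    rewrite H, H0. auto.
Qed.


Lemma eta_mono (eta : R -> R) : homeo_nonneg eta -> forall s t, 0 <= s -> s <= t -> eta s <= eta t.
Proof.
  intros Hh s t Hs [Hst|Hst]. left. apply eta_incr; auto. subst. lra.
Qed.

Lemma X_global (X : MetricSpace) (p : X) (eta : R -> R) :
  homeo_nonneg eta -> comparable_self_qs X eta p ->
  exists (u0 v0 : X) R0, u0 <> v0 /\ 0 < R0 /\ forall x, dist p x <= R0.
Proof.
  intros Hh [rp [Cp [Hrp [HCp Hself]]]].
  destruct (Hself (rp/2)) as [U [f [HUb [_ [Hdg [_ [[Hinj [_ [_ Hqs]]] Hsurj]]]]]]]; [lra|lra|].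
  destruct (diam_wit X U (rp/2/Cp) 0 Hdg) as [a [b [Ha [Hb Hd]]]].
  { apply Rdiv_lt_0_compat; lra. }
  assert (Hab : a <> b) by (intros ->; rewrite dist_refl in Hd; lra).
  assert (Hfab : f a <> f b) by (intros E; apply Hab; apply Hinj; auto).
  pose proof (dist_pos X _ _ Hfab) as Dfab.
  set (M := dist (f a) (f b) * eta (rp / dist a b)).
  exists (f a), (f b), (dist p (f a) + M + 1). split; auto.
  assert (HM : forall y, dist (f a) y <= M).
  { intros y. destruct (Hsurj y) as [x [Hx <-]].
    pose proof (Hqs a x b Ha Hx Hb Hab) as Q.
    assert (Hax : dist a x < rp).
    { pose proof (HUb a Ha). pose proof (HUb x Hx). unfold ball in *.
      pose proof (dist_tri X a p x). rewrite (dist_sym X a p) in *. lra. }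
    assert (Hm : eta (dist a x / dist a b) <= eta (rp / dist a b)).
    { apply (eta_mono eta Hh). apply Rmult_le_pos. apply dist_nonneg. left; apply Rinv_0_lt_compat; auto.
      apply Rmult_le_compat_r. left; apply Rinv_0_lt_compat; auto. lra. }
    unfold M. apply Rmult_le_reg_r with (/ dist (f a) (f b)). apply Rinv_0_lt_compat; auto.
    replace (dist (f a) (f b) * eta (rp / dist a b) * / dist (f a) (f b)) with (eta (rp / dist a b)) by (field; lra).
    unfold Rdiv in Q. lra. }
  assert (0 <= M).
  { pose proof (HM (f a)). pose proof (dist_nonneg X (f a) (f a)). lra. }
  split. pose proof (dist_nonneg X p (f a)). lra.
  intros x. pose proof (dist_tri X p (f a) x). pose proof (HM x). lra.
Qed.


Lemma psi_Q3 (X : MetricSpace) (p : X) (eta etainv : R -> R) :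
  homeo_nonneg eta ->
  (forall u, 0 <= u -> 0 <= etainv u /\ eta (etainv u) = u) ->
  forall (u0 v0 : X) (c : R) (psi : X -> X), u0 <> v0 -> 0 < c ->
  (forall x, dist p (psi x) < c) ->
  (forall x y z, x <> z -> dist (psi x) (psi y) <= dist (psi x) (psi z) * eta_prime etainv (dist x y / dist x z)) ->
  forall e rho0, 0 < e -> 0 < rho0 -> (forall t, 0 <= t < rho0 -> eta_prime etainv t < e) ->
  forall x y, dist x y < rho0 * dist u0 v0 / 2 -> dist (psi x) (psi y) / c < 2 * e.
Proof.
  intros Hh Hinv u0 v0 c psi Huv Hc Hb H5 e rho0 He Hr0 Hsm x y Hxy.
  pose proof (dist_pos X _ _ Huv) as Hd.
  destruct (classic (x = y)) as [<-|Hne].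
  { rewrite dist_refl. unfold Rdiv. rewrite Rmult_0_l. lra. }
  assert (Hw : exists w, dist u0 v0 / 2 <= dist x w).
  { destruct (Rle_or_lt (dist u0 v0 / 2) (dist x u0)). eauto.
    exists v0. pose proof (dist_tri X u0 x v0). rewrite (dist_sym X u0 x) in *. lra. }
  destruct Hw as [w Hw].
  assert (Hxw : x <> w) by (intros <-; rewrite dist_refl in Hw; lra).
  pose proof (dist_pos X _ _ Hxw) as Dxw.
  set (t := dist x y / dist x w).
  assert (Ht0 : 0 <= t) by (unfold t; apply Rmult_le_pos; [apply dist_nonneg| left; apply Rinv_0_lt_compat; auto]).
  assert (Ht : t < rho0).
  { unfold t. apply Rle_lt_trans with (dist x y / (dist u0 v0 / 2)).
    apply Rmult_le_compat_l. apply dist_nonneg. apply Rinv_le_contravar; lra.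
    apply Rmult_lt_reg_r with (dist u0 v0 / 2). lra.
    unfold Rdiv at 1. rewrite Rmult_assoc, Rinv_l by lra. lra. }
  pose proof (Hsm t (conj Ht0 Ht)) as Het.
  pose proof (etaP_nonneg eta etainv Hh Hinv t Ht0) as Hnn.
  pose proof (H5 x y w Hxw) as Q. fold t in Q.
  assert (Hxw2 : dist (psi x) (psi w) < 2 * c).
  { pose proof (Hb x). pose proof (Hb w). pose proof (dist_tri X (psi x) p (psi w)). rewrite (dist_sym X (psi x) p) in *. lra. }
  pose proof (dist_nonneg X (psi x) (psi w)).
  assert (dist (psi x) (psi y) < 2 * c * e).
  { apply Rle_lt_trans with (dist (psi x) (psi w) * eta_prime etainv t); auto.
    apply Rle_lt_trans with (2 * c * eta_prime etainv t). apply Rmult_le_compat_r; lra.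
    apply Rmult_lt_compat_l; lra. }
  apply Rmult_lt_reg_r with c; auto. unfold Rdiv. rewrite Rmult_assoc, Rinv_l by lra. lra.
Qed.

Lemma psi_Q4 (X : MetricSpace) (p : X) (eta etainv : R -> R) :
  homeo_nonneg eta ->
  (forall u, 0 <= u -> 0 <= etainv u /\ eta (etainv u) = u) ->
  forall (R0 Cp c : R) (psi : X -> X), 0 < R0 -> 0 < Cp -> 0 < c ->
  (forall x, dist p x <= R0) ->
  (forall x y z, x <> z -> dist (psi x) (psi y) <= dist (psi x) (psi z) * eta_prime etainv (dist x y / dist x z)) ->
  (exists a b, c / (2 * Cp) < dist (psi a) (psi b)) ->
  forall rho, 0 < rho -> forall x z, rho <= dist x z ->
    / (4 * Cp * eta_prime etainv (2 * R0 / rho)) <= dist (psi x) (psi z) / c.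
Proof.
  intros Hh Hinv R0 Cp c psi HR HCp Hc HRb H5 [a [b Hab]] rho Hr x z Hxz.
  assert (Hy : exists y, c / (4 * Cp) < dist (psi x) (psi y)).
  { destruct (Rlt_or_le (c / (4 * Cp)) (dist (psi x) (psi a))). eauto.
    exists b. pose proof (dist_tri X (psi a) (psi x) (psi b)). rewrite (dist_sym X (psi a) (psi x)) in *.
    assert (c / (2 * Cp) = 2 * (c / (4 * Cp))) by (field; lra). lra. }
  destruct Hy as [y Hy].
  assert (Hxz' : x <> z) by (intros <-; rewrite dist_refl in Hxz; lra).
  pose proof (H5 x y z Hxz') as Q.
  set (E := eta_prime etainv (2 * R0 / rho)).
  assert (HE : 0 < E) by (apply (etaP_pos eta etainv Hh Hinv); apply Rdiv_lt_0_compat; lra).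
  assert (Hle : eta_prime etainv (dist x y / dist x z) <= E).
  { apply (etaP_mono eta etainv Hh Hinv).
    apply Rmult_le_pos. apply dist_nonneg. left; apply Rinv_0_lt_compat; lra.
    assert (dist x y <= 2 * R0).
    { pose proof (HRb x). pose proof (HRb y). pose proof (dist_tri X x p y). rewrite (dist_sym X x p) in *. lra. }
    unfold Rdiv. apply Rmult_le_compat. apply dist_nonneg. left; apply Rinv_0_lt_compat; lra. auto.
    apply Rinv_le_contravar; lra. }
  pose proof (dist_nonneg X (psi x) (psi z)) as Dz.
  assert (Hk : c / (4 * Cp) < dist (psi x) (psi z) * E).
  { apply Rlt_le_trans with (dist (psi x) (psi y)); auto. apply Rle_trans with (1 := Q).
    apply Rmult_le_compat_l; auto. }
  assert (Hk2 : c < 4 * Cp * E * dist (psi x) (psi z)).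
  { apply Rmult_lt_compat_l with (r := 4 * Cp) in Hk; [|lra].
    replace (4 * Cp * (c / (4 * Cp))) with c in Hk by (field; lra). lra. }
  apply Rmult_le_reg_r with (4 * Cp * E * c). apply Rmult_lt_0_compat; [|auto]. apply Rmult_lt_0_compat; lra.
  replace (/ (4 * Cp * E) * (4 * Cp * E * c)) with c by (field; split; lra).
  replace (dist (psi x) (psi z) / c * (4 * Cp * E * c)) with (4 * Cp * E * dist (psi x) (psi z)) by (field; lra).
  lra.
Qed.


Theorem corollary5p2 (X : MetricSpace) (p : X) (eta etainv : R -> R) :
  proper_space X -> doubling X ->
  homeo_nonneg eta ->
  (forall u, 0 <= u -> 0 <= etainv u /\ eta (etainv u) = u) ->
  comparable_self_qs X eta p ->
  forall (Z : MetricSpace) (z : Z),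
    proper_weak_tangent X p Z z ->
    exists f : X -> Z, qs_embedding (eta_prime etainv) f.
Proof.
  intros Hprop _ Hh Hinv Hself Z z [HpZ [HcZ [lam [Hlam [Hlam0 Hgh]]]]].
  destruct (X_global X p eta Hh Hself) as [u0 [v0 [R0 [Huv [HR0 HRb]]]]].
  destruct Hself as [rp [Cp [Hrp [HCp Hself]]]].
  set (QS5 := fun (psi : X -> X) => forall x y z, x <> z ->
     dist (psi x) (psi y) <= dist (psi x) (psi z) * eta_prime etainv (dist x y / dist x z)).
  set (P := fun (k : nat) (c : R) (psi : X -> X) (H : X -> Z) =>
     0 < c /\ (forall x, dist p (psi x) < c) /\ QS5 psi /\
     (exists a b, c / (2 * Cp) < dist (psi a) (psi b)) /\
     (forall x, dist z (H x) <= 2) /\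
     (forall x y, Rabs (dist (H x) (H y) - dist (psi x) (psi y) / c) < / INR (S k))).
  assert (Hper : forall k, exists t : (R * (X -> X)) * (X -> Z), P k (fst (fst t)) (snd (fst t)) (snd t)).
  { intros k. set (e := / INR (S k)).
    assert (He : 0 < e) by apply inv_pos.
    assert (He1 : e <= 1).
    { unfold e. rewrite <- Rinv_1. apply Rinv_le_contravar. lra. rewrite S_INR. pose proof (pos_INR k). lra. }
    destruct (Hgh 2 e ltac:(lra) He) as [N HN].
    destruct (Hlam0 rp Hrp) as [N' HN'].
    set (n := Nat.max N N').
    specialize (HN' n ltac:(lia)). specialize (HN n ltac:(lia)). pose proof (Hlam n) as Hln.
    destruct (Hself (lam n) Hln HN') as [U [f [HUb [_ [Hdg [_ [Hqs Hsurj]]]]]]].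
    destruct (single X p eta etainv Hh Hinv Cp (lam n) U f Hln HCp HUb Hdg Hqs Hsurj)
      as [psi [Hp1 [_ [Hp3 Hp4]]]].
    destruct HN as [g [Hgp [Hgd _]]].
    exists ((lam n, psi), fun x => g (psi x)). simpl.
    assert (Hin : forall x, dist p (psi x) / lam n < 2).
    { intros x. specialize (Hp1 x). apply Rmult_lt_reg_r with (lam n); auto.
      unfold Rdiv. rewrite Rmult_assoc, Rinv_l by lra. lra. }
    split; [auto|split; [auto|split; [exact Hp3|split; [exact Hp4|split]]]].
    - intros x. rewrite <- Hgp.
      assert (Hp0 : dist p p / lam n < 2) by (rewrite dist_refl; unfold Rdiv; rewrite Rmult_0_l; lra).
      pose proof (Hgd p (psi x) Hp0 (Hin x)) as G. apply abs_lt in G.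
      assert (dist p (psi x) / lam n < 1).
      { specialize (Hp1 x). apply Rmult_lt_reg_r with (lam n); auto.
        unfold Rdiv. rewrite Rmult_assoc, Rinv_l by lra. lra. }
      lra.
    - intros x y. apply Hgd; auto. }
  set (T := fun k => proj1_sig (constructive_indefinite_description _ (Hper k))).
  assert (HT : forall k, P k (fst (fst (T k))) (snd (fst (T k))) (snd (T k))).
  { intros k. unfold T. destruct (constructive_indefinite_description _ _). auto. }
  set (c := fun k => fst (fst (T k))). set (psi := fun k => snd (fst (T k))). set (H := fun k => snd (T k)).
  set (A := fun k x y => dist (psi k x) (psi k y) / c k).
  assert (HQ3 : forall e, 0 < e -> exists rho, 0 < rho /\ forall k x y, dist x y < rho -> A k x y < e).
  { intros e He. destruct (etaP_small eta etainv Hh Hinv (e/2)) as [rho0 [Hr0 Hsm]]; [lra|].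
    exists (rho0 * dist u0 v0 / 2). split.
    { pose proof (dist_pos X _ _ Huv). apply Rdiv_lt_0_compat; [apply Rmult_lt_0_compat|]; lra. }
    intros k x y Hxy. destruct (HT k) as [Hc [Hb [H5 _]]].
    pose proof (psi_Q3 X p eta etainv Hh Hinv u0 v0 (c k) (psi k) Huv Hc Hb H5 (e/2) rho0 ltac:(lra) Hr0 Hsm x y Hxy).
    unfold A. lra. }
  destruct (converge X Z z H A) as [h Hhapp].
  - intros rho Hrho. destruct (net_of_compact X (cball X p R0) rho (Hprop p R0) Hrho) as [l Hl].
    exists l. intros x. apply Hl. apply HRb.
  - apply HpZ.
  - exact HcZ.
  - intros k x. apply (HT k).
  - intros k x y. apply (HT k).
  - exact HQ3.
  - exists h. apply (assemble X Z (eta_prime etainv) A h Hhapp HQ3).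
    + intros rho Hrho. 
      set (E := eta_prime etainv (2 * R0 / rho)).
      assert (HE : 0 < E) by (apply (etaP_pos eta etainv Hh Hinv); apply Rdiv_lt_0_compat; lra).
      exists (/ (4 * Cp * E)). split. apply Rinv_0_lt_compat. apply Rmult_lt_0_compat; lra.
      intros k x y Hxy. destruct (HT k) as [Hc [Hb [H5 [H4 _]]]].
      apply (psi_Q4 X p eta etainv Hh Hinv R0 Cp (c k) (psi k) HR0 HCp Hc HRb H5 H4 rho Hrho x y Hxy).
    + intros k x y w Hxw. destruct (HT k) as [Hc [Hb [H5 _]]].
      specialize (H5 x y w Hxw). unfold A.
      unfold Rdiv. rewrite Rmult_assoc, (Rmult_comm (/ c k)), <- Rmult_assoc.
      apply Rmult_le_compat_r; auto. left. apply Rinv_0_lt_compat; auto.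
    + apply (etaP_nonneg eta etainv Hh Hinv).
Qed.
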